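(* Let $X$ be a topological space and $\mathcal{F}:\mathfrak{Off}(X)^{op}\to\mathsf{Grp}$ a functor to small groupoids. If $\mathcal{F}$ satisfies the condition $\mathsf{sh}(2)$ (resp. $\mathsf{st}(2)$), then $\mathcal{F}$ satisfies the condition $\mathsf{sh}(n)$ (resp. $\mathsf{st}(n)$) for every $n\ge2$.
   Context: $\mathfrak{Off}(X)$ is the poset of open subsets of $X$; for $V\subseteq W$ write $x\mapsto x|_V$ for the functor $\mathcal{F}(W)\to\mathcal{F}(V)$; $U_{ij}=U_i\cap U_j$, $U_{ijk}=U_i\cap U_j\cap U_k$. For an integer $n\ge2$, $\mathcal{F}$ satisfies $\mathsf{sh}(n)$ if for every open $U$ and every open cover $U=U_1\cup\dots\cup U_n$, the natural functor from $\mathcal{F}(U)$ to the limit (equaliser) of the two functors $\prod_i\mathcal{F}(U_i)\rightrightarrows\prod_{i,j}\mathcal{F}(U_{ij})$ is an isomorphism of categories; this equaliser is the groupoid of families $(x_i\in\mathcal{F}(U_i))$ with $x_i|_{U_{ij}}=x_j|_{U_{ij}}$ and families of morphisms $f_i$ with $f_i|_{U_{ij}}=f_j|_{U_{ij}}$. $\mathcal{F}$ satisfies $\mathsf{st}(n)$ if for every such $U$ and cover, the natural functor from $\mathcal{F}(U)$ to the 2-limit of $\prod_i\mathcal{F}(U_i)\rightrightarrows\prod_{i,j}\mathcal{F}(U_{ij})\to\prod_{i,j,k}\mathcal{F}(U_{ijk})$ is an equivalence of categories; this 2-limit is the descent groupoid whose objects are $(x_i,\phi_{ij})$ with $x_i\in\mathcal{F}(U_i)$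 and isomorphisms $\phi_{ij}:x_i|_{U_{ij}}\to x_j|_{U_{ij}}$ in $\mathcal{F}(U_{ij})$ satisfying $\phi_{jk}|_{U_{ijk}}\circ\phi_{ij}|_{U_{ijk}}=\phi_{ik}|_{U_{ijk}}$, whose morphisms $(x_i,\phi_{ij})\to(y_i,\eta_{ij})$ are families $f_i:x_i\to y_i$ with $\eta_{ij}\circ f_i|_{U_{ij}}=f_j|_{U_{ij}}\circ\phi_{ij}$, and the natural functor sends $x$ to $(x|_{U_i},\mathrm{id})$. *)

(* Defs.v *)
From HB Require Import structures.
From mathcomp Require Import all_boot.
From mathcomp Require Import classical_sets topology.
Set Implicit Arguments. Unset Strict Implicit. Unset Printing Implicit Defensive.
Local Open Scope classical_set_scope.

(** * Small groupoids, presented with a single type of morphisms.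
    [comp g f] is g o f, meaningful when [tgt f = src g]. *)
Record groupoid := Groupoid {
  ob : Type;
  mor : Type;
  src : mor -> ob;
  tgt : mor -> ob;
  idm : ob -> mor;
  comp : mor -> mor -> mor;
  inv : mor -> mor;
  src_idm : forall x, src (idm x) = x;
  tgt_idm : forall x, tgt (idm x) = x;
  src_comp : forall f g, tgt f = src g -> src (comp g f) = src f;
  tgt_comp : forall f g, tgt f = src g -> tgt (comp g f) = tgt g;
  compA : forall f g h, tgt f = src g -> tgt g = src h ->
            comp h (comp g f) = comp (comp h g) f;
  comp_idr : forall f, comp f (idm (src f)) = f;
  comp_idl : forall f, comp (idm (tgt f)) f = f;
  src_inv : forall f, src (inv f) = tgt f;
  tgt_inv : forall f, tgt (inv f) = src f;
  comp_invl : forall f, comp (inv f) f = idm (src f);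
  comp_invr : forall f, comp f (inv f) = idm (tgt f)
}.

Definition opens (X : topologicalType) := {U : set X | open U}.

Definition oI (X : topologicalType) (V W : opens X) : opens X :=
  exist _ (sval V `&` sval W) (openI (svalP V) (svalP W)).

Lemma oI_subl (X : topologicalType) (V W : opens X) : sval (oI V W) `<=` sval V.
Proof. exact: subIsetl. Qed.
Lemma oI_subr (X : topologicalType) (V W : opens X) : sval (oI V W) `<=` sval W.
Proof. exact: subIsetr. Qed.

Arguments oI_subl {X} V W.
Arguments oI_subr {X} V W.

Lemma oI3_ij (X : topologicalType) (A B C : opens X) :
  sval (oI (oI A B) C) `<=` sval (oI A B).
Proof. exact: subIsetl. Qed.
Lemma oI3_jk (X : topologicalType) (A B C : opens X) :
  sval (oI (oI A B) C) `<=` sval (oI B C).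
Proof. by move=> x [[]]. Qed.
Lemma oI3_ik (X : topologicalType) (A B C : opens X) :
  sval (oI (oI A B) C) `<=` sval (oI A C).
Proof. by move=> x [[]]. Qed.

Arguments oI3_ij {X} A B C.
Arguments oI3_jk {X} A B C.
Arguments oI3_ik {X} A B C.

(** Restriction along V ⊆ W is given for every proof of the inclusion, and
    functoriality is required for all such proofs (the poset has at most one
    arrow V -> W). *)
Record presheaf (X : topologicalType) := Presheaf {
  F_ :> opens X -> groupoid;
  rob : forall V W : opens X, sval V `<=` sval W -> ob (F_ W) -> ob (F_ V);
  rmor : forall V W : opens X, sval V `<=` sval W -> mor (F_ W) -> mor (F_ V);
  rmor_src : forall V W (h : sval V `<=` sval W) f, src (rmor h f) = rob h (src f);
  rmor_tgt : forall V W (h : sval V `<=` sval W) f, tgt (rmor h f) = rob h (tgt f);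
  rmor_idm : forall V W (h : sval V `<=` sval W) x, rmor h (idm x) = idm (rob h x);
  rmor_comp : forall V W (h : sval V `<=` sval W) f g, tgt f = src g ->
      rmor h (comp g f) = comp (rmor h g) (rmor h f);
  rob_id : forall W (h : sval W `<=` sval W) x, rob h x = x;
  rmor_id : forall W (h : sval W `<=` sval W) f, rmor h f = f;
  rob_comp : forall U V W (h1 : sval U `<=` sval V) (h2 : sval V `<=` sval W)
      (h3 : sval U `<=` sval W) x, rob h1 (rob h2 x) = rob h3 x;
  rmor_compose : forall U V W (h1 : sval U `<=` sval V) (h2 : sval V `<=` sval W)
      (h3 : sval U `<=` sval W) f, rmor h1 (rmor h2 f) = rmor h3 f
}.

Arguments rob {X} p {V W}.
Arguments rmor {X} p {V W}.

(** * Condition sh(n): for every open U and cover U = U_1 ∪ ... ∪ U_n, the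
    natural functor F(U) -> Eq( ∏ F(U_i) ⇉ ∏ F(U_ij) ) is an isomorphism of
    categories, i.e. bijective on objects and on morphisms. *)
Definition sh (X : topologicalType) (n : nat) (F : presheaf X) : Prop :=
  forall (U : opens X) (Ui : 'I_n -> opens X)
         (hsub : forall i, sval (Ui i) `<=` sval U),
    sval U `<=` \bigcup_i sval (Ui i) ->
    let pl i j := oI_subl (Ui i) (Ui j) in
    let pr i j := oI_subr (Ui i) (Ui j) in
    ((forall x y : ob (F U), (forall i, rob F (hsub i) x = rob F (hsub i) y) -> x = y) /\
     (forall xs : forall i, ob (F (Ui i)),
        (forall i j, rob F (pl i j) (xs i) = rob F (pr i j) (xs j)) ->
        exists x : ob (F U), forall i, rob F (hsub i) x = xs i)) /\
    ((forall f g : mor (F U), (forall i, rmor F (hsub i) f = rmor F (hsub i) g) -> f = g) /\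
     (forall fs : forall i, mor (F (Ui i)),
        (forall i j, rmor F (pl i j) (fs i) = rmor F (pr i j) (fs j)) ->
        exists f : mor (F U), forall i, rmor F (hsub i) f = fs i)).

Section Descent.
Local Unset Implicit Arguments.
Variables (X : topologicalType) (F : presheaf X) (n : nat) (Ui : 'I_n -> opens X).

Let Uij i j := oI (Ui i) (Ui j).
Let pl i j : sval (Uij i j) `<=` sval (Ui i) := oI_subl (Ui i) (Ui j).
Let pr i j : sval (Uij i j) `<=` sval (Ui j) := oI_subr (Ui i) (Ui j).

Definition descent_ob (xs : forall i, ob (F (Ui i)))
    (phi : forall i j, mor (F (Uij i j))) : Prop :=
  (forall i j, src (phi i j) = rob F (pl i j) (xs i) /\
               tgt (phi i j) = rob F (pr i j) (xs j)) /\
  (forall i j k,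
     comp (rmor F (oI3_jk (Ui i) (Ui j) (Ui k)) (phi j k))
          (rmor F (oI3_ij (Ui i) (Ui j) (Ui k)) (phi i j))
     = rmor F (oI3_ik (Ui i) (Ui j) (Ui k)) (phi i k)).

Definition descent_mor (xs : forall i, ob (F (Ui i))) (phi : forall i j, mor (F (Uij i j)))
    (ys : forall i, ob (F (Ui i))) (eta : forall i j, mor (F (Uij i j)))
    (fs : forall i, mor (F (Ui i))) : Prop :=
  (forall i, src (fs i) = xs i /\ tgt (fs i) = ys i) /\
  (forall i j, comp (eta i j) (rmor F (pl i j) (fs i))
               = comp (rmor F (pr i j) (fs j)) (phi i j)).

Definition nat_phi (U : opens X) (hsub : forall i, sval (Ui i) `<=` sval U)
    (x : ob (F U)) : forall i j, mor (F (Uij i j)) :=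
  fun i j => idm (rob F (pl i j) (rob F (hsub i) x)).

End Descent.
Arguments descent_ob {X} F {n} Ui.
Arguments descent_mor {X} F {n} Ui.
Arguments nat_phi {X} F {n Ui U} hsub x.

(** * Condition st(n): the natural functor F(U) -> descent groupoid,
    x |-> (x|U_i, id), f |-> (f|U_i), is an equivalence of categories, i.e.
    it is faithful, full and essentially surjective. *)
Definition st (X : topologicalType) (n : nat) (F : presheaf X) : Prop :=
  forall (U : opens X) (Ui : 'I_n -> opens X)
         (hsub : forall i, sval (Ui i) `<=` sval U),
    sval U `<=` \bigcup_i sval (Ui i) ->
    let xr (x : ob (F U)) := fun i => rob F (hsub i) x in
    let fr (f : mor (F U)) := fun i => rmor F (hsub i) f in
    (forall f g : mor (F U), src f = src g -> tgt f = tgt g ->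
        (forall i, fr f i = fr g i) -> f = g) /\
    (forall (x y : ob (F U)) (fs : forall i, mor (F (Ui i))),
        descent_mor F Ui (xr x) (nat_phi F hsub x) (xr y) (nat_phi F hsub y) fs ->
        exists f : mor (F U), src f = x /\ tgt f = y /\ forall i, fr f i = fs i) /\
    (forall (xs : forall i, ob (F (Ui i)))
            (phi : forall i j, mor (F (oI (Ui i) (Ui j)))),
        descent_ob F Ui xs phi ->
        exists (x : ob (F U)) (fs : forall i, mor (F (Ui i))),
          descent_mor F Ui (xr x) (nat_phi F hsub x) xs phi fs).

(* Main.v *)
Require Import Defs.
From mathcomp Require Import all_boot.
From mathcomp Require Import classical_sets topology.
From Stdlib Require Import ProofIrrelevance IndefiniteDescription.
Import Defs.
Set Implicit Arguments. Unset Strict Implicit. Unset Printing Implicit Defensive.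
Local Open Scope classical_set_scope.

Definition strans (X : topologicalType) (U V W : opens X)
  (h1 : sval U `<=` sval V) (h2 : sval V `<=` sval W) : sval U `<=` sval W :=
  fun z hz => h2 z (h1 z hz).

Lemma rr (X : topologicalType) (F : presheaf X) (U V W : opens X)
  (h1 : sval U `<=` sval V) (h2 : sval V `<=` sval W) x :
  rob F h1 (rob F h2 x) = rob F (strans h1 h2) x.
Proof. exact: rob_comp. Qed.
Lemma mm (X : topologicalType) (F : presheaf X) (U V W : opens X)
  (h1 : sval U `<=` sval V) (h2 : sval V `<=` sval W) x :
  rmor F h1 (rmor F h2 x) = rmor F (strans h1 h2) x.
Proof. exact: rmor_compose. Qed.
Lemma rpi (X : topologicalType) (F : presheaf X) (V W : opens X)
  (h h' : sval V `<=` sval W) x : rob F h x = rob F h' x.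
Proof. by rewrite (proof_irrelevance _ h h'). Qed.
Lemma mpi (X : topologicalType) (F : presheaf X) (V W : opens X)
  (h h' : sval V `<=` sval W) x : rmor F h x = rmor F h' x.
Proof. by rewrite (proof_irrelevance _ h h'). Qed.

Ltac rrpi := rewrite ?rr ?mm; first [apply: rpi | apply: mpi].

Lemma comp_idr' (G : groupoid) (g : mor G) z : z = src g -> comp g (idm z) = g.
Proof. by move=> ->; exact: comp_idr. Qed.
Lemma comp_idl' (G : groupoid) (g : mor G) z : z = tgt g -> comp (idm z) g = g.
Proof. by move=> ->; exact: comp_idl. Qed.

Lemma test (X : topologicalType) (F : presheaf X) (U V W : opens X)
  (h1 : sval U `<=` sval V) (h2 : sval V `<=` sval W) (h3 : sval U `<=` sval W) x :
  rob F h1 (rob F h2 x) = rob F h3 x.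
Proof. rrpi. Qed.
Lemma dm_nat (X : topologicalType) (F : presheaf X) n (Ui : 'I_n -> opens X) (U : opens X)
  (hsub : forall i, sval (Ui i) `<=` sval U) x y fs :
  descent_mor F Ui (fun i => rob F (hsub i) x) (nat_phi F hsub x)
     (fun i => rob F (hsub i) y) (nat_phi F hsub y) fs <->
  (forall i, src (fs i) = rob F (hsub i) x /\ tgt (fs i) = rob F (hsub i) y) /\
  (forall i j, rmor F (oI_subl (Ui i) (Ui j)) (fs i) = rmor F (oI_subr (Ui i) (Ui j)) (fs j)).
Proof.
rewrite /descent_mor /nat_phi; split; case=> hst hc; split=> // i j; move: (hc i j).
- rewrite comp_idl'; last by rewrite rmor_tgt (hst i).2.
  by rewrite comp_idr' //; rewrite rmor_src (hst j).1; rrpi.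
- move=> e; rewrite comp_idl'; last by rewrite rmor_tgt (hst i).2.
  by rewrite comp_idr' //; rewrite rmor_src (hst j).1; rrpi.
Qed.
Definition cov2 (X : topologicalType) (V W : opens X) : 'I_2 -> opens X :=
  fun k => if nat_of_ord k is 0 then V else W.
Definition dsel (X : topologicalType) (V W : opens X) (T : opens X -> Type) (v : T V) (w : T W) :
  forall k, T (cov2 V W k) :=
  fun k => match nat_of_ord k as m return T (if m is 0 then V else W) with 0 => v | _ => w end.
Lemma cov2_cov (X : topologicalType) (U V W : opens X) :
  sval U `<=` sval V `|` sval W -> sval U `<=` \bigcup_k sval (cov2 V W k).
Proof.
move=> hc z /hc [hz|hz]; first by exists (@Ordinal 2 0 isT).
by exists (@Ordinal 2 1 isT).
Qed.
Lemma oI_swap (X : topologicalType) (V W : opens X) : sval (oI W V) `<=` sval (oI V W).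
Proof. by move=> z [a b]; split. Qed.

Lemma sh2 (X : topologicalType) (F : presheaf X) (H : sh 2 F) (U V W : opens X)
  (hV : sval V `<=` sval U) (hW : sval W `<=` sval U) (hc : sval U `<=` sval V `|` sval W) :
 ((forall x y : ob (F U), rob F hV x = rob F hV y -> rob F hW x = rob F hW y -> x = y) /\
  (forall v w, rob F (oI_subl V W) v = rob F (oI_subr V W) w ->
      exists x, rob F hV x = v /\ rob F hW x = w)) /\
 ((forall x y : mor (F U), rmor F hV x = rmor F hV y -> rmor F hW x = rmor F hW y -> x = y) /\
  (forall v w, rmor F (oI_subl V W) v = rmor F (oI_subr V W) w ->
      exists x, rmor F hV x = v /\ rmor F hW x = w)).
Proof.
have [[i1 s1] [i2 s2]] := H U (cov2 V W) (@dsel X V W (fun O : opens X => sval O `<=` sval U) hV hW) (cov2_cov hc).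
split; split.
- by move=> x y e1 e2; apply: i1 => -[[|[|m]] hm].
- move=> v w e.
  edestruct (s1 (@dsel X V W (fun O : opens X => ob (F O)) v w)) as [x hx]; last first.
    by exists x; split; [exact: (hx (@Ordinal 2 0 isT)) | exact: (hx (@Ordinal 2 1 isT))].
    move=> [[|[|m]] hi] [[|[|m']] hj] //=; try rrpi.
    have := f_equal (rob F (@oI_swap X V W)) e; rewrite !rr => e'.
    transitivity (rob F (strans (@oI_swap X V W) (oI_subr V W)) w); first by rrpi.
    by rewrite -e'; rrpi.
- by move=> x y e1 e2; apply: i2 => -[[|[|m]] hm].
- move=> v w e.
  edestruct (s2 (@dsel X V W (fun O : opens X => mor (F O)) v w)) as [x hx]; last first.
    by exists x; split; [exact: (hx (@Ordinal 2 0 isT)) | exact: (hx (@Ordinal 2 1 isT))].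
    move=> [[|[|m]] hi] [[|[|m']] hj] //=; try rrpi.
    have := f_equal (rmor F (@oI_swap X V W)) e; rewrite !mm => e'.
    transitivity (rmor F (strans (@oI_swap X V W) (oI_subr V W)) w); first by rrpi.
    by rewrite -e'; rrpi.
Qed.
Definition bigV (X : topologicalType) n (Ui : 'I_n.+1 -> opens X) : opens X :=
  exist _ (\bigcup_(j : 'I_n) sval (Ui (lift ord_max j)))
    (bigcup_open (fun j _ => svalP (Ui (lift ord_max j)))).

Lemma bigV_sub (X : topologicalType) n (Ui : 'I_n.+1 -> opens X) j :
  sval (Ui (lift ord_max j)) `<=` sval (bigV Ui).
Proof. by move=> z hz; exists j. Qed.

Lemma bigV_subU (X : topologicalType) n (Ui : 'I_n.+1 -> opens X) (U : opens X) :
  (forall i, sval (Ui i) `<=` sval U) -> sval (bigV Ui) `<=` sval U.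
Proof. by move=> hsub z [j _ hz]; exact: hsub _ _ hz. Qed.

Lemma bigV_cov (X : topologicalType) n (Ui : 'I_n.+1 -> opens X) (U : opens X) :
  sval U `<=` \bigcup_i sval (Ui i) -> sval U `<=` sval (bigV Ui) `|` sval (Ui ord_max).
Proof.
move=> hcov z /hcov [i _ hz]; case: (unliftP ord_max i) hz => [j ->|->] hz.
  by left; exists j.
by right.
Qed.

Lemma bigV_cov' (X : topologicalType) n (Ui : 'I_n.+1 -> opens X) :
  sval (bigV Ui) `<=` \bigcup_j sval (Ui (lift ord_max j)).
Proof. by []. Qed.

Lemma bigP_sub (X : topologicalType) n (Ui : 'I_n.+1 -> opens X) j :
  sval (oI (Ui (lift ord_max j)) (Ui ord_max)) `<=` sval (oI (bigV Ui) (Ui ord_max)).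
Proof. by move=> z [h1 h2]; split=> //; exists j. Qed.

Lemma bigP_cov (X : topologicalType) n (Ui : 'I_n.+1 -> opens X) :
  sval (oI (bigV Ui) (Ui ord_max)) `<=` \bigcup_j sval (oI (Ui (lift ord_max j)) (Ui ord_max)).
Proof. by move=> z [[j _ h1] h2]; exists j. Qed.

Lemma sh_step (X : topologicalType) (F : presheaf X) n (H2 : sh 2 F) (Hn : sh n F) :
  sh n.+1 F.
Proof.
move=> U Ui hsub hcov pl pr.
have hV := bigV_subU hsub.
have [[iV sV] [miV msV]] := Hn _ _ (@bigV_sub X n Ui) (@bigV_cov' X n Ui).
have [[iP sP] [miP msP]] := Hn _ _ (@bigP_sub X n Ui) (@bigP_cov X n Ui).
have [[i2 s2] [mi2 ms2]] := sh2 H2 hV (hsub ord_max) (bigV_cov hcov).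
split; split.
- move=> x y hxy; apply: i2; last exact: hxy.
  apply: iV => j; rewrite !rr.
  transitivity (rob F (hsub (lift ord_max j)) x); first by rrpi.
  by rewrite hxy; rrpi.
- move=> xs hx.
  have [v hv] := sV (fun j => xs (lift ord_max j)) (fun i j => hx _ _).
  have e : rob F (oI_subl (bigV Ui) (Ui ord_max)) v = rob F (oI_subr (bigV Ui) (Ui ord_max)) (xs ord_max).
    apply: iP => j.
    transitivity (rob F (pl (lift ord_max j) ord_max) (rob F (@bigV_sub X n Ui j) v)); first by rrpi.
    by rewrite hv hx; rrpi.
  have [x [hxV hxW]] := s2 _ _ e.
  exists x => i; case: (unliftP ord_max i) => [j ->|->] //.
  transitivity (rob F (@bigV_sub X n Ui j) (rob F hV x)); first by rrpi.
  by rewrite hxV hv.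
- move=> x y hxy; apply: mi2; last exact: hxy.
  apply: miV => j; rewrite !mm.
  transitivity (rmor F (hsub (lift ord_max j)) x); first by rrpi.
  by rewrite hxy; rrpi.
- move=> xs hx.
  have [v hv] := msV (fun j => xs (lift ord_max j)) (fun i j => hx _ _).
  have e : rmor F (oI_subl (bigV Ui) (Ui ord_max)) v = rmor F (oI_subr (bigV Ui) (Ui ord_max)) (xs ord_max).
    apply: miP => j.
    transitivity (rmor F (pl (lift ord_max j) ord_max) (rmor F (@bigV_sub X n Ui j) v)); first by rrpi.
    by rewrite hv hx; rrpi.
  have [x [hxV hxW]] := ms2 _ _ e.
  exists x => i; case: (unliftP ord_max i) => [j ->|->] //.
  transitivity (rmor F (@bigV_sub X n Ui j) (rmor F hV x)); first by rrpi.
  by rewrite hxV hv.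
Qed.
Lemma rmor_comp2 (X : topologicalType) (F : presheaf X) (V W : opens X)
  (h1 h2 : sval V `<=` sval W) f g : tgt f = src g ->
  comp (rmor F h1 g) (rmor F h2 f) = rmor F h2 (comp g f).
Proof. by move=> e; rewrite (proof_irrelevance _ h1 h2) rmor_comp. Qed.

Definition phi2 (X : topologicalType) (F : presheaf X) (V W : opens X) (xV : ob (F V)) (xW : ob (F W))
  (psi : mor (F (oI V W))) : forall i j : 'I_2, mor (F (oI (cov2 V W i) (cov2 V W j))) :=
 fun i j => match nat_of_ord i as a, nat_of_ord j as b
   return mor (F (oI (if a is 0 then V else W) (if b is 0 then V else W))) with
 | 0, 0 => idm (rob F (oI_subl V V) xV)
 | 0, S _ => psi
 | S _, 0 => rmor F (@oI_swap X V W) (inv psi)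
 | S _, S _ => idm (rob F (oI_subl W W) xW) end.

Ltac side hs ht := rewrite ?rmor_src ?rmor_tgt ?src_idm ?tgt_idm ?src_inv ?tgt_inv ?rmor_src ?rmor_tgt ?hs ?ht; rrpi.
Ltac idcase hs ht := rewrite ?rmor_idm;
  (rewrite comp_idl' || rewrite comp_idr');
  [ first [rrpi | congr idm; rrpi] | side hs ht ].

Lemma phi2_ob (X : topologicalType) (F : presheaf X) (V W : opens X) (xV : ob (F V)) (xW : ob (F W))
  (psi : mor (F (oI V W))) :
  src psi = rob F (oI_subl V W) xV -> tgt psi = rob F (oI_subr V W) xW ->
  descent_ob F (cov2 V W) (@dsel X V W (fun O : opens X => ob (F O)) xV xW) (@phi2 X F V W xV xW psi).
Proof.
move=> hs ht; split.
  move=> [[|[|m]] hi] [[|[|m']] hj] //=; split; try side hs ht.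
move=> [[|[|m]] hi] [[|[|m']] hj] [[|[|m'']] hk] //; rewrite /phi2 /=; try idcase hs ht.
- rewrite mm rmor_comp2; last by rewrite src_inv.
  by rewrite comp_invl !rmor_idm hs; congr idm; rrpi.
- rewrite mm rmor_comp2; last by rewrite tgt_inv.
  by rewrite comp_invr !rmor_idm ht; congr idm; rrpi.
Qed.
Lemma st2 (X : topologicalType) (F : presheaf X) (H : st 2 F) (U V W : opens X)
  (hV : sval V `<=` sval U) (hW : sval W `<=` sval U) (hc : sval U `<=` sval V `|` sval W) :
 (forall f g : mor (F U), src f = src g -> tgt f = tgt g ->
    rmor F hV f = rmor F hV g -> rmor F hW f = rmor F hW g -> f = g) /\
 (forall x y fV fW, src fV = rob F hV x -> tgt fV = rob F hV y ->
    src fW = rob F hW x -> tgt fW = rob F hW y ->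
    rmor F (oI_subl V W) fV = rmor F (oI_subr V W) fW ->
    exists f, src f = x /\ tgt f = y /\ rmor F hV f = fV /\ rmor F hW f = fW) /\
 (forall xV xW psi, src psi = rob F (oI_subl V W) xV -> tgt psi = rob F (oI_subr V W) xW ->
    exists x fV fW, src fV = rob F hV x /\ tgt fV = xV /\ src fW = rob F hW x /\ tgt fW = xW /\
      comp psi (rmor F (oI_subl V W) fV) = rmor F (oI_subr V W) fW).
Proof.
have [fa [fu es]] := H U (cov2 V W) (@dsel X V W (fun O : opens X => sval O `<=` sval U) hV hW) (cov2_cov hc).
split; [|split].
- by move=> f g e1 e2 e3 e4; apply: fa => // -[[|[|m]] hm].
- move=> x y fV fW s1 t1 s2 t2 e.
  edestruct (fu x y (@dsel X V W (fun O : opens X => mor (F O)) fV fW)) as [f [sf [tf hf]]]; last first.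
    exists f; split=> //; split=> //; split; [exact: (hf (@Ordinal 2 0 isT)) | exact: (hf (@Ordinal 2 1 isT))].
  apply: (proj2 (@dm_nat X F 2 (cov2 V W) U _ x y _)); split.
    by move=> [[|[|m]] hi].
  move=> [[|[|m]] hi] [[|[|m']] hj] //=; try rrpi.
  have := f_equal (rmor F (@oI_swap X V W)) e; rewrite !mm => e'.
  transitivity (rmor F (strans (@oI_swap X V W) (oI_subr V W)) fW); first by rrpi.
  by rewrite -e'; rrpi.
- move=> xV xW psi hs ht.
  have [x [fs [hst hc2]]] := es (@dsel X V W (fun O : opens X => ob (F O)) xV xW) (@phi2 X F V W xV xW psi) (phi2_ob hs ht).
  exists x, (fs (@Ordinal 2 0 isT)), (fs (@Ordinal 2 1 isT)).
  have [s0 t0] := hst (@Ordinal 2 0 isT).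
  have [s1 t1] := hst (@Ordinal 2 1 isT).
  do 4 (split => //).
  have := hc2 (@Ordinal 2 0 isT) (@Ordinal 2 1 isT).
  rewrite /phi2 /nat_phi /= => ->.
  by apply: comp_idr'; rewrite rmor_src s1; rrpi.
Qed.
Lemma idem (G : groupoid) (a : mor G) : comp a a = a -> src a = tgt a -> a = idm (src a).
Proof.
move=> e st.
have : comp (comp a a) (inv a) = comp a (inv a) by rewrite e.
by rewrite -compA ?tgt_inv // comp_invr -st comp_idr.
Qed.

Lemma oAA (X : topologicalType) (A : opens X) : sval (oI A A) `<=` sval (oI (oI A A) A).
Proof. by move=> z [h1 h2]. Qed.

Lemma diag_id (X : topologicalType) (F : presheaf X) (A : opens X) (xA : ob (F A)) (p : mor (F (oI A A))) :
  src p = rob F (oI_subl A A) xA -> tgt p = rob F (oI_subr A A) xA ->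
  comp (rmor F (oI3_jk A A A) p) (rmor F (oI3_ij A A A) p) = rmor F (oI3_ik A A A) p ->
  p = idm (rob F (oI_subl A A) xA).
Proof.
move=> hs ht hc.
have ha : rmor F (oI3_ij A A A) p = idm (src (rmor F (oI3_ij A A A) p)).
  apply: idem; last by rewrite rmor_src rmor_tgt hs ht; rrpi.
  rewrite -[in RHS](mpi (oI3_ik A A A)) -hc; congr comp; rrpi.
transitivity (rmor F (strans (@oAA X A) (oI3_ij A A A)) p).
  by rewrite (mpi _ (fun z hz => hz)) rmor_id.
rewrite -mm ha rmor_idm rmor_src hs; congr idm; rrpi.
Qed.

Lemma oBA (X : topologicalType) (A B : opens X) : sval (oI B A) `<=` sval (oI (oI A B) A).
Proof. by move=> z [h1 h2]. Qed.

Lemma sym_desc (X : topologicalType) (F : presheaf X) (A B : opens X) (xA : ob (F A)) (xB : ob (F B))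
  (pAB : mor (F (oI A B))) (pBA : mor (F (oI B A))) (pAA : mor (F (oI A A))) tA tB :
  src pAB = rob F (oI_subl A B) xA -> tgt pAB = rob F (oI_subr A B) xB ->
  src pBA = rob F (oI_subl B A) xB -> tgt pBA = rob F (oI_subr B A) xA ->
  src pAA = rob F (oI_subl A A) xA -> tgt pAA = rob F (oI_subr A A) xA ->
  comp (rmor F (oI3_jk A A A) pAA) (rmor F (oI3_ij A A A) pAA) = rmor F (oI3_ik A A A) pAA ->
  comp (rmor F (oI3_jk A B A) pBA) (rmor F (oI3_ij A B A) pAB) = rmor F (oI3_ik A B A) pAA ->
  tgt tA = xA -> tgt tB = xB ->
  comp pAB (rmor F (oI_subl A B) tA) = rmor F (oI_subr A B) tB ->
  comp pBA (rmor F (oI_subl B A) tB) = rmor F (oI_subr B A) tA.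
Proof.
move=> s1 t1 s2 t2 s3 t3 cAAA cABA htA htB e.
have dA := diag_id s3 t3 cAAA.
have e' := f_equal (rmor F (@oI_swap X A B)) e.
rewrite rmor_comp in e'; last by rewrite rmor_tgt htA s1.
rewrite !mm in e'.
have E : comp pBA (rmor F (@oI_swap X A B) pAB) = idm (rob F (oI_subr B A) xA).
  have := f_equal (rmor F (@oBA X A B)) cABA.
  rewrite rmor_comp; last by rewrite rmor_tgt rmor_src t1 s2; rrpi.
  rewrite !mm dA rmor_idm => E.
  transitivity (comp (rmor F (strans (@oBA X A B) (oI3_jk A B A)) pBA)
                     (rmor F (strans (@oBA X A B) (oI3_ij A B A)) pAB)).
    congr comp; last by rrpi.
    by rewrite (mpi _ (fun z hz => hz)) rmor_id.
  by rewrite E; congr idm; rrpi.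
transitivity (comp pBA (rmor F (strans (@oI_swap X A B) (oI_subr A B)) tB)); first by congr comp; rrpi.
rewrite -e' compA; try by rewrite ?rmor_tgt ?rmor_src ?htA ?s1 ?t1 ?s2; rrpi.
rewrite E comp_idl'; first by rrpi.
by rewrite rmor_tgt htA; rrpi.
Qed.
Lemma choose_fam n (T : 'I_n.+1 -> Type) (g : forall j : 'I_n, T (lift ord_max j)) (w : T ord_max) :
  exists f : forall i, T i, (forall j, f (lift ord_max j) = g j) /\ f ord_max = w.
Proof.
have H : forall i, exists t : T i,
    (forall j (e : lift ord_max j = i), t = eq_rect _ T (g j) i e) /\
    (forall e : ord_max = i, t = eq_rect _ T w i e).
  move=> i; case: (unliftP ord_max i) => [j ->|->].
    exists (g j); split.
      move=> j' e; have ej := lift_inj e; subst j'.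
      by rewrite (eq_irrelevance e erefl).
    by move=> e; exfalso; move: (neq_lift ord_max j); rewrite -e eqxx.
  exists w; split.
    by move=> j e; exfalso; move: (neq_lift ord_max j); rewrite e eqxx.
  by move=> e; rewrite (eq_irrelevance e erefl).
exists (fun i => proj1_sig (constructive_indefinite_description _ (H i))); split.
  move=> j; have [h1 _] := proj2_sig (constructive_indefinite_description _ (H (lift ord_max j))).
  exact: (h1 j erefl).
have [_ h2] := proj2_sig (constructive_indefinite_description _ (H ord_max)).
exact: (h2 erefl).
Qed.
Lemma oQT (X : topologicalType) (A B C : opens X) :
  sval (oI (oI A C) (oI B C)) `<=` sval (oI (oI A B) C).
Proof. by move=> z [[h1 h2] [h3 h4]]. Qed.

Lemma compat_core (X : topologicalType) (F : presheaf X) (A B C : opens X)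
  (xA : ob (F A)) (xB : ob (F B)) (xC : ob (F C))
  (pAB : mor (F (oI A B))) (pAC : mor (F (oI A C))) (pBC : mor (F (oI B C)))
  (gA : mor (F A)) (gB : mor (F B)) :
  src pAB = rob F (oI_subl A B) xA -> tgt pAB = rob F (oI_subr A B) xB ->
  src pAC = rob F (oI_subl A C) xA -> tgt pAC = rob F (oI_subr A C) xC ->
  src pBC = rob F (oI_subl B C) xB -> tgt pBC = rob F (oI_subr B C) xC ->
  tgt gA = xA -> tgt gB = xB ->
  comp (rmor F (oI3_jk A B C) pBC) (rmor F (oI3_ij A B C) pAB) = rmor F (oI3_ik A B C) pAC ->
  comp pAB (rmor F (oI_subl A B) gA) = rmor F (oI_subr A B) gB ->
  rmor F (oI_subl (oI A C) (oI B C)) (comp pAC (rmor F (oI_subl A C) gA)) =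
  rmor F (oI_subr (oI A C) (oI B C)) (comp pBC (rmor F (oI_subl B C) gB)).
Proof.
move=> s1 t1 s2 t2 s3 t3 tgA tgB coc hgc.
rewrite rmor_comp; last by rewrite rmor_tgt tgA s2.
rewrite [in RHS]rmor_comp; last by rewrite rmor_tgt tgB s3.
have E1 : rmor F (oI_subr (oI A C) (oI B C)) (rmor F (oI_subl B C) gB) =
   comp (rmor F (strans (@oQT X A B C) (oI3_ij A B C)) pAB)
        (rmor F (strans (oI_subl (oI A C) (oI B C)) (oI_subl A C)) gA).
  transitivity (rmor F (strans (@oQT X A B C) (oI3_ij A B C)) (rmor F (oI_subr A B) gB)); first by rrpi.
  rewrite -hgc rmor_comp; last by rewrite rmor_tgt tgA s1.
  by congr comp; rrpi.
rewrite E1 compA; try by rewrite ?rmor_tgt ?rmor_src ?tgA ?s1 ?t1 ?s3; rrpi.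
have E2 : comp (rmor F (oI_subr (oI A C) (oI B C)) pBC) (rmor F (strans (@oQT X A B C) (oI3_ij A B C)) pAB)
          = rmor F (oI_subl (oI A C) (oI B C)) pAC.
  have := f_equal (rmor F (@oQT X A B C)) coc.
  rewrite rmor_comp; last by rewrite rmor_tgt rmor_src t1 s3; rrpi.
  rewrite !mm => E.
  transitivity (comp (rmor F (strans (@oQT X A B C) (oI3_jk A B C)) pBC)
                     (rmor F (strans (@oQT X A B C) (oI3_ij A B C)) pAB)); first by congr comp; rrpi.
  by rewrite E; rrpi.
by rewrite E2; congr comp; rrpi.
Qed.
Lemma st_step (X : topologicalType) (F : presheaf X) n (H2 : st 2 F) (Hn : st n F) :
  st n.+1 F.
Proof.
move=> U Ui hsub hcov; cbv beta zeta.
have hV := bigV_subU hsub.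
have := Hn _ _ (@bigV_sub X n Ui) (@bigV_cov' X n Ui); cbv beta zeta; move=> [faV [fuV esV]].
have := Hn _ _ (@bigP_sub X n Ui) (@bigP_cov X n Ui); cbv beta zeta; move=> [faP [fuP esP]].
have [fa2 [fu2 es2]] := st2 H2 hV (hsub ord_max) (bigV_cov hcov).
split; [|split].
- move=> f g hs ht hfg; apply: fa2; [done|done| |exact: hfg ord_max].
  apply: faV; [by rewrite !rmor_src hs | by rewrite !rmor_tgt ht | move=> j].
  rewrite !mm; transitivity (rmor F (hsub (lift ord_max j)) f); first by rrpi.
  by rewrite hfg; rrpi.
- move=> x y fs hd.
  have [hst hcomp] := proj1 (@dm_nat X F n.+1 Ui U hsub x y fs) hd.
  have dV : descent_mor F (fun j => Ui (lift ord_max j))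
     (fun j => rob F (@bigV_sub X n Ui j) (rob F hV x)) (nat_phi F (@bigV_sub X n Ui) (rob F hV x))
     (fun j => rob F (@bigV_sub X n Ui j) (rob F hV y)) (nat_phi F (@bigV_sub X n Ui) (rob F hV y))
     (fun j => fs (lift ord_max j)).
    apply: (proj2 (@dm_nat X F n (fun j => Ui (lift ord_max j)) (bigV Ui) (@bigV_sub X n Ui) _ _ _)); split.
      by move=> j; rewrite (proj1 (hst _)) (proj2 (hst _)); split; rrpi.
    by move=> i j; exact: hcomp.
  have [fV [sfV [tfV hfV]]] := fuV _ _ _ dV.
  have cV : rmor F (oI_subl (bigV Ui) (Ui ord_max)) fV = rmor F (oI_subr (bigV Ui) (Ui ord_max)) (fs ord_max).
    apply: faP.
    + by rewrite !rmor_src sfV (proj1 (hst _)); rrpi.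
    + by rewrite !rmor_tgt tfV (proj2 (hst _)); rrpi.
    + move=> j; transitivity (rmor F (oI_subl (Ui (lift ord_max j)) (Ui ord_max)) (rmor F (@bigV_sub X n Ui j) fV)); first by rrpi.
      by rewrite hfV hcomp; rrpi.
  have [f [sf [tf [hf1 hf2]]]] := fu2 x y fV (fs ord_max) sfV tfV (proj1 (hst _)) (proj2 (hst _)) cV.
  exists f; do 2 (split => //); move=> i; case: (unliftP ord_max i) => [j ->|->] //.
  transitivity (rmor F (@bigV_sub X n Ui j) (rmor F hV f)); first by rrpi.
  by rewrite hf1 hfV.
- move=> xs phi [hxs hcoc].
  have dV : descent_ob F (fun j => Ui (lift ord_max j)) (fun j => xs (lift ord_max j))
      (fun i j => phi (lift ord_max i) (lift ord_max j)).
    by split; [move=> i j; exact: hxs | move=> i j k; exact: hcoc].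
  have [v [gs [hgst hgc]]] := esV _ _ dV.
  have hgc' : forall a b, comp (phi (lift ord_max a) (lift ord_max b))
      (rmor F (oI_subl (Ui (lift ord_max a)) (Ui (lift ord_max b))) (gs a)) =
      rmor F (oI_subr (Ui (lift ord_max a)) (Ui (lift ord_max b))) (gs b).
    move=> a b; rewrite (hgc a b) /nat_phi; apply: comp_idr'.
    by rewrite rmor_src (proj1 (hgst b)); rrpi.
  pose hs j := comp (phi (lift ord_max j) ord_max)
                 (rmor F (oI_subl (Ui (lift ord_max j)) (Ui ord_max)) (gs j)).
  have dP : descent_mor F (fun j => oI (Ui (lift ord_max j)) (Ui ord_max))
     (fun j => rob F (@bigP_sub X n Ui j) (rob F (oI_subl (bigV Ui) (Ui ord_max)) v))
     (nat_phi F (@bigP_sub X n Ui) (rob F (oI_subl (bigV Ui) (Ui ord_max)) v))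
     (fun j => rob F (@bigP_sub X n Ui j) (rob F (oI_subr (bigV Ui) (Ui ord_max)) (xs ord_max)))
     (nat_phi F (@bigP_sub X n Ui) (rob F (oI_subr (bigV Ui) (Ui ord_max)) (xs ord_max))) hs.
    apply: (proj2 (@dm_nat X F n (fun j => oI (Ui (lift ord_max j)) (Ui ord_max)) _ (@bigP_sub X n Ui) _ _ _)); split.
      move=> j; rewrite /hs.
      have c : tgt (rmor F (oI_subl (Ui (lift ord_max j)) (Ui ord_max)) (gs j)) = src (phi (lift ord_max j) ord_max).
        by rewrite rmor_tgt (proj2 (hgst j)) (proj1 (hxs _ _)).
      rewrite src_comp // tgt_comp // rmor_src (proj1 (hgst j)) (proj2 (hxs _ _)).
      by split; rrpi.
    move=> i j; rewrite /hs.
    apply: (compat_core (xA := xs (lift ord_max i)) (xB := xs (lift ord_max j)) (xC := xs ord_max));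
      try solve [exact: (proj1 (hxs _ _)) | exact: (proj2 (hxs _ _)) | exact: (proj2 (hgst _))].
      exact: hcoc.
    exact: hgc'.
  have [psi [spsi [tpsi hpsi]]] := fuP _ _ _ dP.
  have [x [fV [fW [sfV [tfV [sfW [tfW epsi]]]]]]] := es2 _ _ psi spsi tpsi.
  have [fs [hfsL hfsN]] := @choose_fam n (fun i : 'I_n.+1 => mor (F (Ui i)))
     (fun j : 'I_n => comp (gs j) (rmor F (@bigV_sub X n Ui j) fV)) fW.
  have hfst : forall i, src (fs i) = rob F (hsub i) x /\ tgt (fs i) = xs i.
    move=> i; case: (unliftP ord_max i) => [j ->|->]; last by rewrite hfsN.
    have c : tgt (rmor F (@bigV_sub X n Ui j) fV) = src (gs j).
      by rewrite rmor_tgt tfV (proj1 (hgst j)).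
    rewrite hfsL src_comp // tgt_comp // rmor_src sfV (proj2 (hgst j)); split => //; rrpi.
  have GaN : forall a, comp (phi (lift ord_max a) ord_max)
      (rmor F (oI_subl (Ui (lift ord_max a)) (Ui ord_max)) (fs (lift ord_max a))) =
      rmor F (oI_subr (Ui (lift ord_max a)) (Ui ord_max)) (fs ord_max).
    move=> a; rewrite hfsL hfsN.
    rewrite rmor_comp; last by rewrite rmor_tgt tfV (proj1 (hgst a)).
    rewrite compA; try by rewrite ?rmor_tgt ?rmor_src ?tfV ?(proj1 (hgst a)) ?(proj2 (hgst a)) ?(proj1 (hxs _ _)); rrpi.
    transitivity (comp (rmor F (@bigP_sub X n Ui a) psi)
       (rmor F (strans (@bigP_sub X n Ui a) (oI_subl (bigV Ui) (Ui ord_max))) fV)).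
      by congr comp; [rewrite hpsi | rrpi].
    rewrite -mm -rmor_comp; last by rewrite rmor_tgt tfV spsi.
    by rewrite epsi; rrpi.
  exists x, fs; split; first exact: hfst.
  move=> i j; rewrite /nat_phi comp_idr'; last by rewrite rmor_src (proj1 (hfst j)); rrpi.
  case: (unliftP ord_max i) => [a ->|->]; case: (unliftP ord_max j) => [b ->|->].
  + rewrite !hfsL rmor_comp; last by rewrite rmor_tgt tfV (proj1 (hgst a)).
    rewrite compA; try by rewrite ?rmor_tgt ?rmor_src ?tfV ?(proj1 (hgst a)) ?(proj2 (hgst a)) ?(proj1 (hxs _ _)); rrpi.
    rewrite hgc' [in RHS]rmor_comp; last by rewrite rmor_tgt tfV (proj1 (hgst b)).
    by congr comp; rrpi.
  + exact: GaN.
  + apply: (sym_desc (xA := xs (lift ord_max b)) (xB := xs ord_max)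
       (pAB := phi (lift ord_max b) ord_max) (pAA := phi (lift ord_max b) (lift ord_max b)));
      try solve [exact: (proj1 (hxs _ _)) | exact: (proj2 (hxs _ _)) | exact: (proj2 (hfst _)) | exact: hcoc | exact: GaN].
  + rewrite (diag_id (proj1 (hxs ord_max ord_max)) (proj2 (hxs ord_max ord_max)) (hcoc ord_max ord_max ord_max)).
    rewrite comp_idl'; first by rrpi.
    by rewrite rmor_tgt (proj2 (hfst _)); rrpi.
Qed.

Theorem lemma6p2 (X : topologicalType) (F : presheaf X) :
  (sh 2 F -> forall n : nat, 2 <= n -> sh n F) /\
  (st 2 F -> forall n : nat, 2 <= n -> st n F).
Proof.
split=> H2; elim=> [|n IH] //; rewrite leq_eqVlt => /orP [/eqP <- //|hn].
  by apply: sh_step => //; apply: IH.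
by apply: st_step => //; apply: IH.
Qed.
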